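(* Let $c\in(0,1)$ and let $f:[0,1]\to[0,1]$ be a piecewise contracting map with contraction pieces $X_1=[0,c)$ and $X_2=(c,1]$, whose continuous extensions $f_1:[0,c]\to[0,1]$ and $f_2:[c,1]\to[0,1]$ are increasing and satisfy $0=f_2(c)<f_2(1)<f_1(0)<f_1(c)=1$. For $k\in\mathbb{N}$ let $H_k:=f^k\big((f(1),f(0))\big)$. If $c\notin\overline{H_k}$ for all $k\in\mathbb{N}$, then $H_k=(f^{k+1}(1),f^{k+1}(0))$ for all $k\in\mathbb{N}$, \[ \Lambda_n=[0,1]\setminus\bigcup_{k=0}^{n-1}H_k\qquad\forall\, n\geqslant 1, \] $\{0,1\}\subset\widetilde X$, and for every $n\geqslant 1$ and every $A\in\mathcal{A}_n$ there exist $p,q\in\mathbb{N}$ with $A=[f^p(0),f^q(1)]$.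
   Context: Piecewise contracting: $f$ is discontinuous at $c$ and there is $\lambda\in(0,1)$ with $|f(x)-f(y)|\leqslant\lambda|x-y|$ for $x,y$ both in $[0,c)$ or both in $(c,1]$. $\Delta=\{c\}$ and $\widetilde X:=\bigcap_{n\geqslant0}f^{-n}([0,1]\setminus\{c\})$. Atoms: $F_i(A):=\overline{f(A\cap X_i)}$ for $i=1,2$, and $A_{i_1\dots i_n}:=F_{i_n}\circ\dots\circ F_{i_1}([0,1])$ is an atom of generation $n$ if non-empty; $\mathcal{A}_n$ is the set of atoms of generation $n$ and $\Lambda_n:=\bigcup_{A\in\mathcal{A}_n}A$. $f^k(S)$ denotes the image of a set $S$ under $f^k$; $\mathbb{N}=\{0,1,\dots\}$. *)

(* Defs.v *)
From HB Require Import structures.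
From mathcomp Require Import all_boot all_order all_algebra.
From mathcomp Require Import all_classical all_reals all_analysis.
Set Implicit Arguments. Unset Strict Implicit. Unset Printing Implicit Defensive.
Import Order.TTheory GRing.Theory Num.Theory.
Import numFieldNormedType.Exports.
Local Open Scope classical_set_scope.
Local Open Scope ring_scope.

Inductive piece := P1 | P2.

Definition piece_set (R : realType) (c : R) (i : piece) : set R :=
  match i with P1 => [set` `[0, c[] | P2 => [set` `]c, 1]] end.

Definition piecewise_contracting (R : realType) (f : R -> R) (c : R) : Prop :=
  ~ {for c, continuous f} /\
  exists lam : R, 0 < lam < 1 /\
    (forall i x y, piece_set c i x -> piece_set c i y ->
       `|f x - f y| <= lam * `|x - y|).

Definition Fmap (R : realType) (f : R -> R) (c : R) (i : piece) (A : set R) : set R :=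
  closure (f @` (A `&` piece_set c i)).

Definition atom_of (R : realType) (f : R -> R) (c : R) (w : seq piece) : set R :=
  foldl (fun A i => Fmap f c i A) [set` `[0, 1]] w.

Definition atoms (R : realType) (f : R -> R) (c : R) (n : nat) : set (set R) :=
  [set A | exists w : seq piece, size w = n /\ A = atom_of f c w /\ A !=set0].

Definition Lambda (R : realType) (f : R -> R) (c : R) (n : nat) : set R :=
  \bigcup_(A in atoms f c n) A.

Definition Xtilde (R : realType) (f : R -> R) (c : R) : set R :=
  \bigcap_(n in [set: nat]) ((iter n f) @^-1` ([set` `[0, 1]] `\ c)).

Definition Hk (R : realType) (f : R -> R) (k : nat) : set R :=
  iter k f @` [set` `]f 1, f 0[].

(* Main.v *)
Require Import Defs.
From HB Require Import structures.
From mathcomp Require Import all_boot all_order all_algebra.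
From mathcomp Require Import all_classical all_reals all_analysis.
From mathcomp Require Import lra.
Import Order.TTheory GRing.Theory Num.Theory.
Import numFieldNormedType.Exports.
Local Open Scope classical_set_scope.
Local Open Scope ring_scope.

Ltac is_arith T := lazymatch T with
 | is_true (_ <= _) => idtac | is_true (_ < _) => idtac | is_true (_ \in _) => idtac
 | is_true (_ && _) => idtac | mkset _ _ => idtac | _ /\ _ => idtac
 | @eq (set _) _ _ => fail | @eq (_ -> _) _ _ => fail | @eq _ _ _ => idtac
 | _ => fail end.
Ltac clean := repeat match goal with H : ?T |- _ => tryif is_arith T then fail else clear H end.
Ltac itv := first [assumption | clean; rewrite /= ?in_itv /=; repeat match goal with
 | H : is_true (_ \in Interval _ _) |- _ => rewrite in_itv /= in H
 | H : mkset _ _ |- _ => progress rewrite /= in H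
 | H : _ /\ _ |- _ => let h1 := fresh "h" in let h2 := fresh "h" in destruct H as [h1 h2]
 | H : is_true (_ && _) |- _ => let h1 := fresh "h" in let h2 := fresh "h" in apply andb_prop in H; destruct H as [h1 h2]
 | |- is_true (_ && _) => apply andb_true_intro; split
 end; try lra].

Lemma ltge {R : realType} (x y : R) : x < y \/ y <= x.
Proof. by case: (ltP x y); [left | right]. Qed.

Lemma givt (R : realType) (g : R -> R) s t : s <= t -> {within [set` `[s,t]], continuous g} ->
  forall z, g s <= z <= g t -> exists2 y, y \in `[s,t] & g y = z.
Proof.
move=> st gc z hz; apply: IVT => //.
have gst : g s <= g t by case/andP: hz => h1 h2; apply: le_trans h2.
by rewrite min_l // max_r.
Qed.

Lemma img_gen (R : realType) (g : R -> R) s t a b (la lb : bool) : s <= t ->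
  {within [set` `[s,t]], continuous g} -> {in `[s,t] &, {homo g : x y / x < y}} ->
  s <= a -> b <= t -> a <= b ->
  g @` [set` Interval (BSide la a) (BSide lb b)] = [set` Interval (BSide la (g a)) (BSide lb (g b))].
Proof.
move=> st gc gm sa bt ab.
have ha : a \in `[s,t] by itv.
have hb : b \in `[s,t] by itv.
have hs : s \in `[s,t] by itv.
have ht : t \in `[s,t] by itv.
have gle x y : x \in `[s,t] -> y \in `[s,t] -> (g x <= g y) = (x <= y).
  by move=> hx hy; rewrite (le_mono_in gm).
have glt x y : x \in `[s,t] -> y \in `[s,t] -> (g x < g y) = (x < y).
  by move=> hx hy; rewrite (leW_mono_in (le_mono_in gm)).
apply/seteqP; split.
  move=> _ [y hy <-]; have hyst : y \in `[s,t].
    move: hy; rewrite /= itv_boundlr /=; case: la; case: lb; rewrite /= ?bnd_simp; itv.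
  move: hy; rewrite /= !itv_boundlr /=; case: la; case: lb;
  rewrite /= ?bnd_simp -?(gle _ _ ha hyst) -?(gle _ _ hyst hb) -?(glt _ _ ha hyst) -?(glt _ _ hyst hb) //.
move=> z hz; have [|y hy gyz] := @givt _ g s t st gc z.
  have := gle _ _ hs ha; have := gle _ _ hb ht; rewrite sa bt => h1 h2.
  move: hz; rewrite /= !itv_boundlr /=; case: la; case: lb; rewrite /= ?bnd_simp; itv.
exists y => //; subst z.
move: hz; rewrite /= !itv_boundlr /=; case: la; case: lb;
  rewrite /= ?bnd_simp -?(gle _ _ ha hy) -?(gle _ _ hy hb) -?(glt _ _ ha hy) -?(glt _ _ hy hb) //.
Qed.

Lemma cl_oo (R : realType) (a b : R) : a < b ->
  [set` `[a, b]] `<=` closure [set` `]a, b[].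
Proof.
move=> ab x; rewrite /= in_itv /= => /andP[ax xb].
move=> B /nbhs_ballP [e /= e0 zB].
have m1 : Num.min e (b - a) <= e by rewrite ge_min lexx.
have m2 : Num.min e (b - a) <= b - a by rewrite ge_min lexx orbT.
have m0 : 0 < Num.min e (b - a) by rewrite lt_min e0 subr_gt0.
move: (Num.min e (b - a)) m1 m2 m0 => m m1 m2 m0.
destruct (ltge x b) as [xb'|xb'].
- destruct (ltge a x) as [ax'|ax'].
  + exists x; split; first by rewrite /= in_itv /= ax' xb'.
    by apply: zB; exact: ballxx.
  + have xa : x = a by apply/eqP; rewrite eq_le ax' ax.
    subst x; exists (a + m / 2); split.
      rewrite /= in_itv /=; apply/andP; split; lra.
    apply: zB; rewrite /ball /= opprD addrA subrr add0r normrN gtr0_norm; lra.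
- have xb2 : x = b by apply/eqP; rewrite eq_le xb xb'.
  subst x; exists (b - m / 2); split.
    rewrite /= in_itv /=; apply/andP; split; lra.
  apply: zB; rewrite /ball /= opprB addrC subrK gtr0_norm; lra.
Qed.

Lemma cl_sub (R : realType) (S K : set R) : closed K -> S `<=` K -> closure S `<=` K.
Proof. by move=> cK SK; rewrite (closure_id K).1 //; exact: closureS. Qed.

Lemma cl_cc (R : realType) (a b : R) : closure [set` `[a, b]] = [set` `[a, b]].
Proof. by rewrite -(closure_id _).1 //; exact: itv_closed. Qed.

Lemma cl_co (R : realType) (a b : R) : a < b -> closure [set` `[a, b[] = [set` `[a, b]].
Proof.
move=> ab; apply/seteqP; split.
  apply: cl_sub; first exact: itv_closed.
  by move=> x /=; itv.
move=> x /(cl_oo _ _ _ ab); apply: closureS => y /=; itv.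
Qed.

Lemma cl_oc (R : realType) (a b : R) : a < b -> closure [set` `]a, b]] = [set` `[a, b]].
Proof.
move=> ab; apply/seteqP; split.
  apply: cl_sub; first exact: itv_closed.
  by move=> x /=; itv.
move=> x /(cl_oo _ _ _ ab); apply: closureS => y /=; itv.
Qed.

Lemma img_cc (R : realType) (g : R -> R) s t a b : s <= t ->
  {within [set` `[s,t]], continuous g} -> {in `[s,t] &, {homo g : x y / x < y}} ->
  s <= a -> b <= t -> a <= b ->
  g @` [set` `[a, b]] = [set` `[g a, g b]].
Proof. exact: (@img_gen R g s t a b true false). Qed.
Lemma img_co (R : realType) (g : R -> R) s t a b : s <= t ->
  {within [set` `[s,t]], continuous g} -> {in `[s,t] &, {homo g : x y / x < y}} ->
  s <= a -> b <= t -> a <= b ->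
  g @` [set` `[a, b[] = [set` `[g a, g b[].
Proof. exact: (@img_gen R g s t a b true true). Qed.
Lemma img_oc (R : realType) (g : R -> R) s t a b : s <= t ->
  {within [set` `[s,t]], continuous g} -> {in `[s,t] &, {homo g : x y / x < y}} ->
  s <= a -> b <= t -> a <= b ->
  g @` [set` `]a, b]] = [set` `]g a, g b]].
Proof. exact: (@img_gen R g s t a b false false). Qed.
Lemma img_oo (R : realType) (g : R -> R) s t a b : s <= t ->
  {within [set` `[s,t]], continuous g} -> {in `[s,t] &, {homo g : x y / x < y}} ->
  s <= a -> b <= t -> a <= b ->
  g @` [set` `]a, b[] = [set` `]g a, g b[].
Proof. exact: (@img_gen R g s t a b false true). Qed.


Set Implicit Arguments.
Record Hyp (R : realType) (c : R) (f f1 f2 : R -> R) : Prop := MkHyp {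
  hc0 : 0 < c; hc1 : c < 1;
  hf01 : forall x : R, x \in `[0, 1] -> f x \in `[0, 1];
  hf1c : {within [set` `[0, c]], continuous f1};
  hf1e : {in `[0, c[, f1 =1 f};
  hf1m : {in `[0, c] &, {homo f1 : x y / x < y}};
  hf2c : {within [set` `[c, 1]], continuous f2};
  hf2e : {in `]c, 1], f2 =1 f};
  hf2m : {in `[c, 1] &, {homo f2 : x y / x < y}};
  hh0 : 0 = f2 c; hh1 : f2 c < f2 1; hh2 : f2 1 < f1 0; hh3 : f1 0 < f1 c; hh4 : f1 c = 1;
  hhH : forall k : nat, ~ closure (Hk f k) c }.
Arguments Hyp {R} c f f1 f2.

Section Basic.
Variables (R : realType) (c : R) (f f1 f2 : R -> R).

Lemma L_le1 (H : Hyp c f f1 f2) (x y : R) : x \in `[0,c] -> y \in `[0,c] -> (f1 x <= f1 y) = (x <= y).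
Proof. by move=> hx hy; rewrite (le_mono_in (hf1m H)). Qed.
Lemma L_lt1 (H : Hyp c f f1 f2) (x y : R) : x \in `[0,c] -> y \in `[0,c] -> (f1 x < f1 y) = (x < y).
Proof. by move=> hx hy; rewrite (leW_mono_in (le_mono_in (hf1m H))). Qed.
Lemma L_le2 (H : Hyp c f f1 f2) (x y : R) : x \in `[c,1] -> y \in `[c,1] -> (f2 x <= f2 y) = (x <= y).
Proof. by move=> hx hy; rewrite (le_mono_in (hf2m H)). Qed.
Lemma L_lt2 (H : Hyp c f f1 f2) (x y : R) : x \in `[c,1] -> y \in `[c,1] -> (f2 x < f2 y) = (x < y).
Proof. by move=> hx hy; rewrite (leW_mono_in (le_mono_in (hf2m H))). Qed.
Lemma L_I01 (H : Hyp c f f1 f2) n (x : R) : x \in `[0,1] -> iter n f x \in `[0,1].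
Proof. by move=> hx; elim: n => [//|n IH]; rewrite iterS; apply: (hf01 H). Qed.
Lemma L_HkS k : Hk f k.+1 = f @` Hk f k.
Proof.
apply/seteqP; split => x /=.
  by move=> [y hy <-]; rewrite iterS; exists (iter k f y) => //; exists y.
by move=> [_ [y hy <-] <-]; exists y => //; rewrite iterS.
Qed.
Lemma L_AR w i : atom_of f c (rcons w i) = Fmap f c i (atom_of f c w).
Proof. by rewrite /atom_of foldl_rcons. Qed.
End Basic.

Ltac prelude H :=
  have le1 := L_le1 H; have lt1 := L_lt1 H; have le2 := L_le2 H; have lt2 := L_lt2 H;
  have I01 := L_I01 H; have HkS := L_HkS;
  case: (H) => c0 c1 hf01 f1c f1e f1m f2c f2e f2m h0 h1 h2 h3 h4 hH.

Lemma L_f01 (R : realType) (c : R) (f f1 f2 : R -> R) (H : Hyp c f f1 f2) :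
  [/\ f 0 = f1 0, f 1 = f2 1, 0 <= f 0 <= 1 & 0 <= f 1 <= 1].
Proof.
prelude H.
have f0e : f 0 = f1 0 by rewrite f1e //; itv.
have f1e' : f 1 = f2 1 by rewrite f2e //; itv.
have f0i : f 0 \in `[0,1] by apply: hf01; itv.
have f1i : f 1 \in `[0,1] by apply: hf01; itv.
by split => //; rewrite -in_itv.
Qed.

Ltac prelude2 H := have [f0e f1e' /andP[f0l f0u] /andP[f1l f1u]] := L_f01 H; prelude H.

Lemma L_B1 (R : realType) (c : R) (f f1 f2 : R -> R) (H : Hyp c f f1 f2) y :
  y \in `[0,c[ -> [/\ f y = f1 y, f1 0 <= f y & f y < 1].
Proof.
prelude2 H.
move=> hy; rewrite -f1e //; split => //.
  by rewrite le1; itv.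
by rewrite -h4 lt1; itv.
Qed.

Lemma L_B2 (R : realType) (c : R) (f f1 f2 : R -> R) (H : Hyp c f f1 f2) y :
  y \in `]c,1] -> [/\ f y = f2 y, 0 < f y & f y <= f2 1].
Proof.
prelude2 H.
move=> hy; rewrite -f2e //; split => //.
  by rewrite h0 lt2; itv.
by rewrite le2; itv.
Qed.

Ltac prelude3 H := have B1 := L_B1 H; have B2 := L_B2 H; prelude2 H.

Lemma L_sideL (R : realType) (c : R) (f f1 f2 : R -> R) (H : Hyp c f f1 f2) (a b : R) k :
  a < b -> Hk f k = [set` `]a,b[] -> b < c \/ c < a.
Proof.
prelude3 H.
move=> ab E; have := hH k; rewrite E => nc.
destruct (ltge b c) as [bc|bc]; first by left.
destruct (ltge c a) as [ca|ca]; first by right.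
by exfalso; apply: nc; apply: (@cl_oo _ a b ab); itv.
Qed.

Lemma L_C1 (R : realType) (c : R) (f f1 f2 : R -> R) (H : Hyp c f f1 f2) k :
  [/\ iter k.+1 f 1 < iter k.+1 f 0,
   Hk f k = [set` `]iter k.+1 f 1, iter k.+1 f 0[] &
   (iter k.+1 f 0 < c \/ c < iter k.+1 f 1)].
Proof.
have sideL := L_sideL H.
prelude3 H.
elim: k => [|k [ab E side]].
  have E : Hk f 0 = [set` `]f 1, f 0[].
    by apply/seteqP; split => x /=; [case=> y hy <- | move=> hx; exists x].
  have lt : f 1 < f 0 by rewrite f0e f1e'.
  by split => //; apply: sideL E.
have ai : iter k.+1 f 1 \in `[0,1] by apply: I01; itv.
have bi : iter k.+1 f 0 \in `[0,1] by apply: I01; itv.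
rewrite [iter k.+2 f 1]iterS [iter k.+2 f 0]iterS.
move: (iter k.+1 f 1) (iter k.+1 f 0) ai bi ab side E => a b ai bi ab side E.
have [lt E'] : f a < f b /\ f @` [set` `]a,b[] = [set` `]f a, f b[].
  case: side => [bc|ca].
    have -> : f @` [set` `]a,b[] = f1 @` [set` `]a,b[] by apply: eq_imagel => y hy; rewrite f1e //; itv.
    have E1 : f1 @` [set` `]a,b[] = [set` `]f1 a, f1 b[] by apply: (@img_oo R f1 0 c a b); itv.
    rewrite E1.
    have fa : f1 a = f a by apply: f1e; itv.
    have fb : f1 b = f b by apply: f1e; itv.
    rewrite -fa -fb; split => //; rewrite lt1 //; itv.
  have -> : f @` [set` `]a,b[] = f2 @` [set` `]a,b[] by apply: eq_imagel => y hy; rewrite f2e //; itv.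
  have E1 : f2 @` [set` `]a,b[] = [set` `]f2 a, f2 b[] by apply: (@img_oo R f2 c 1 a b); itv.
  rewrite E1.
  have fa : f2 a = f a by apply: f2e; itv.
    have fb : f2 b = f b by apply: f2e; itv.
    rewrite -fa -fb; split => //; rewrite lt2 //; itv.
have E2 : Hk f k.+1 = [set` `]f a, f b[] by rewrite HkS E.
by split => //; apply: sideL E2.
Qed.

Lemma L_nc (R : realType) (c : R) (f f1 f2 : R -> R) (H : Hyp c f f1 f2) n :
  iter n f 0 != c /\ iter n f 1 != c.
Proof.
have C1 := L_C1 H.
prelude3 H.
have inHk k : closure (Hk f k) (iter k.+1 f 1) /\ closure (Hk f k) (iter k.+1 f 0).
  have [ab E _] := C1 k; rewrite E; move: (iter k.+1 f 1) (iter k.+1 f 0) ab => a b ab.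
  by split; apply: (@cl_oo _ _ _ ab); itv.
split.
  case: n => [|k]; first by rewrite /= (lt_eqF c0).
  by apply/eqP => e; apply: (hH k); rewrite -e; case: (inHk k).
case: n => [|k]; first by rewrite /= (gt_eqF c1).
by apply/eqP => e; apply: (hH k); rewrite -e; case: (inHk k).
Qed.

Lemma L_inv (R : realType) (c : R) (f f1 f2 : R -> R) (H : Hyp c f f1 f2) w :
  exists p q, atom_of f c w = [set` `[iter p f 0, iter q f 1]].
Proof.
have nc0 : forall n, iter n f 0 != c := fun n => (L_nc H n).1.
have nc1 : forall n, iter n f 1 != c := fun n => (L_nc H n).2.
have AR := @L_AR R c f.
prelude3 H.
have E0 : [set` `[iter 1 f 0, iter 1 f 1]] = set0.
  apply/seteqP; split => x //=; rewrite in_itv /= => /andP[h h'].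
  have : f 1 < f 0 by rewrite f0e f1e'.
  move=> h''; lra.
have Eset (x y : R) : y < x -> [set` `[x,y]] = set0.
  by move=> yx; apply/seteqP; split => z //=; itv.
elim/last_ind: w => [|w i [p [q IH]]]; first by exists 0%N, 0%N.
rewrite AR IH /Fmap.
have xi : iter p f 0 \in `[0,1] by apply: I01; itv.
have yi : iter q f 1 \in `[0,1] by apply: I01; itv.
have xc := nc0 p; have yc := nc1 q.
set x := iter p f 0 in xi xc *; set y := iter q f 1 in yi yc *.
destruct (ltge y x) as [yx|yx].
  by exists 1%N, 1%N; rewrite E0 (Eset _ _ yx) set0I image_set0 closure0.
case: i => /=.
- destruct (ltge c x) as [cx|cx].
    exists 1%N, 1%N; rewrite E0.
    have -> : [set` `[x,y]] `&` [set` `[0,c[] = set0.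
      by apply/seteqP; split => z //=; itv.
    by rewrite image_set0 closure0.
  have xc' : x < c by rewrite lt_neqAle xc cx.
  have fa : f1 x = f x by apply: f1e; itv.
  destruct (ltge y c) as [yc'|yc'].
    exists p.+1, q.+1; rewrite !iterS -/x -/y.
    have -> : [set` `[x,y]] `&` [set` `[0,c[] = [set` `[x,y]].
      by apply/seteqP; split => z /=; itv.
    have -> : f @` [set` `[x,y]] = f1 @` [set` `[x,y]].
      by apply: eq_imagel => z hz; rewrite f1e //; itv.
    have E1 : f1 @` [set` `[x,y]] = [set` `[f1 x, f1 y]].
      by apply: (@img_cc R f1 0 c x y); itv.
    have fb : f1 y = f y by apply: f1e; itv.
    by rewrite E1 cl_cc fa fb.
  have yc2 : c < y by rewrite lt_neqAle eq_sym yc yc'.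
  exists p.+1, 0%N; rewrite iterS -/x.
  have -> : iter 0 f 1 = 1 by [].
  have -> : [set` `[x,y]] `&` [set` `[0,c[] = [set` `[x,c[].
    by apply/seteqP; split => z /=; itv.
  have -> : f @` [set` `[x,c[] = f1 @` [set` `[x,c[].
    by apply: eq_imagel => z hz; rewrite f1e //; itv.
  have E1 : f1 @` [set` `[x,c[] = [set` `[f1 x, f1 c[].
    by apply: (@img_co R f1 0 c x c); itv.
  have lt : f1 x < f1 c by rewrite lt1 //; itv.
  by rewrite E1 cl_co // fa h4.
- destruct (ltge y c) as [yc'|yc'].
    exists 1%N, 1%N; rewrite E0.
    have -> : [set` `[x,y]] `&` [set` `]c,1]] = set0.
      by apply/seteqP; split => z //=; itv.
    by rewrite image_set0 closure0.
  have yc2 : c < y by rewrite lt_neqAle eq_sym yc yc'.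
  have fb : f2 y = f y by apply: f2e; itv.
  destruct (ltge c x) as [cx|cx].
    exists p.+1, q.+1; rewrite !iterS -/x -/y.
    have -> : [set` `[x,y]] `&` [set` `]c,1]] = [set` `[x,y]].
      by apply/seteqP; split => z /=; itv.
    have -> : f @` [set` `[x,y]] = f2 @` [set` `[x,y]].
      by apply: eq_imagel => z hz; rewrite f2e //; itv.
    have E1 : f2 @` [set` `[x,y]] = [set` `[f2 x, f2 y]].
      by apply: (@img_cc R f2 c 1 x y); itv.
    have fa : f2 x = f x by apply: f2e; itv.
    by rewrite E1 cl_cc fa fb.
  exists 0%N, q.+1; rewrite iterS -/y.
  have -> : iter 0 f 0 = 0 by [].
  have -> : [set` `[x,y]] `&` [set` `]c,1]] = [set` `]c,y]].
    by apply/seteqP; split => z /=; itv.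
  have -> : f @` [set` `]c,y]] = f2 @` [set` `]c,y]].
    by apply: eq_imagel => z hz; rewrite f2e //; itv.
  have E1 : f2 @` [set` `]c,y]] = [set` `]f2 c, f2 y]].
    by apply: (@img_oc R f2 c 1 c y); itv.
  have lt : f2 c < f2 y by rewrite lt2 //; itv.
  by rewrite E1 cl_oc // fb h0.
Qed.

Lemma L_key (R : realType) (c : R) (f f1 f2 : R -> R) (H : Hyp c f f1 f2) k y i :
  piece_set c i y -> Hk f k.+1 (f y) -> Hk f k y.
Proof.
have C1 := L_C1 H.
prelude3 H.
have [ab E side] := C1 k; have [_ E' _] := C1 k.+1.
rewrite E' E [iter k.+2 f 1]iterS [iter k.+2 f 0]iterS.
have ai : iter k.+1 f 1 \in `[0,1] by apply: I01; itv.
have bi : iter k.+1 f 0 \in `[0,1] by apply: I01; itv.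
move: (iter k.+1 f 1) (iter k.+1 f 0) ai bi ab side => a b ai bi ab side.
case: side => [bc|ca]; case: i => /= hy; rewrite /= !in_itv /= => /andP[l r].
- have fa : f1 a = f a by apply: f1e; itv.
  have fb : f1 b = f b by apply: f1e; itv.
  have [fy _ _] := B1 y hy.
  have ha : a \in `[0,c] by itv.
  have hb : b \in `[0,c] by itv.
  have hy' : y \in `[0,c] by itv.
  by move: l r; rewrite fy -fa -fb (lt1 _ _ ha hy') (lt1 _ _ hy' hb) => -> ->.
- have fa : f1 a = f a by apply: f1e; itv.
  have [fy h h'] := B2 y hy.
  have h0a : f1 0 <= f1 a by rewrite le1 //; itv.
  exfalso; rewrite -fa in l; lra.
- have fa : f2 a = f a by apply: f2e; itv.
  have [fy h h'] := B1 y hy.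
  have fb : f2 b = f b by apply: f2e; itv.
  have hb1 : f2 b <= f2 1 by rewrite le2 //; itv.
  exfalso; rewrite -fb in r; lra.
- have fa : f2 a = f a by apply: f2e; itv.
  have fb : f2 b = f b by apply: f2e; itv.
  have [fy _ _] := B2 y hy.
  have ha : a \in `[c,1] by itv.
  have hb : b \in `[c,1] by itv.
  have hy' : y \in `[c,1] by itv.
  by move: l r; rewrite fy -fa -fb (lt2 _ _ ha hy') (lt2 _ _ hy' hb) => -> ->.
Qed.

Lemma L_sub (R : realType) (c : R) (f f1 f2 : R -> R) (H : Hyp c f f1 f2) w x :
  atom_of f c w x -> x \in `[0,1] /\ forall k, (k < size w)%N -> ~ Hk f k x.
Proof.
have C1 := L_C1 H; have key := L_key H.
have AR := @L_AR R c f.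
prelude3 H.
have K1 (B : set R) : Fmap f c P1 B `<=` [set` `[f 0, 1]].
  apply: cl_sub; first exact: itv_closed.
  move=> _ [y [_ hy] <-]; have [_ h h'] := B1 y hy.
  by rewrite /= in_itv /= f0e h (ltW h').
have K2 (B : set R) : Fmap f c P2 B `<=` [set` `[0, f 1]].
  apply: cl_sub; first exact: itv_closed.
  move=> _ [y [_ hy] <-]; have [_ h h'] := B2 y hy.
  by rewrite /= in_itv /= f1e' h' (ltW h).
elim/last_ind: w x => [|w i IH] x.
  by move=> hx; split; [exact: hx | move=> k; rewrite ltn0].
rewrite AR size_rcons => hx.
have hK : x \in `[f 0, 1] \/ x \in `[0, f 1].
  by case: i hx => hx; [left; exact: K1 hx | right; exact: K2 hx].
split; first by case: hK; itv.
move=> [|k] hk.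
  have [_ E _] := C1 0; rewrite E /= in_itv /= => /andP[l r].
  by case: hK; itv.
move=> hH1.
have nb : nbhs x (Hk f k.+1).
  have [_ E _] := C1 k.+1; rewrite E; apply: open_nbhs_nbhs; split; first exact: itv_open.
  by rewrite -E.
have [z [[y [By Xy] <-] Hz]] := hx _ nb.
have [_ hI] := IH y By; apply: (hI k hk); exact: key Xy Hz.
Qed.

Lemma L_sup (R : realType) (c : R) (f f1 f2 : R -> R) (H : Hyp c f f1 f2) n x :
  x \in `[0,1] -> (forall k, (k < n)%N -> ~ Hk f k x) ->
    exists w, size w = n /\ atom_of f c w x.
Proof.
have C1 := L_C1 H; have inv := L_inv H.
have nc0 : forall n, iter n f 0 != c := fun n => (L_nc H n).1.
have nc1 : forall n, iter n f 1 != c := fun n => (L_nc H n).2.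
have AR := @L_AR R c f.
prelude3 H.
elim: n x => [|n IH] x hx hk; first by exists [::].
have fwd k y : Hk f k y -> Hk f k.+1 (f y) by move=> hy; rewrite HkS; exists y.
have hcn k : (k < n)%N -> ~ Hk f k c by move=> _ /subset_closure; apply: hH.
have [x0|[x1|x01]] : x = 0 \/ x = 1 \/ 0 < x < 1.
  have [x0|x0] := eqVneq x 0; first by left.
  have [x1|x1] := eqVneq x 1; first by right; left.
  right; right; move: hx; rewrite in_itv /= => /andP[a b].
  by rewrite !lt_def x0 a eq_sym x1 b.
- have hc01 : c \in `[0,1] by itv.
  have [w [sw cw]] := IH c hc01 hcn.
  have [p [q Aw]] := inv w.
  rewrite Aw /= in_itv /= in cw; case/andP: cw => cu cv.
  have uc : iter p f 0 < c by rewrite lt_neqAle nc0 cu.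
  have vc : c < iter q f 1 by rewrite lt_neqAle eq_sym nc1 cv.
  have ui : iter p f 0 \in `[0,1] by apply: I01; itv.
  have vi : iter q f 1 \in `[0,1] by apply: I01; itv.
  exists (rcons w P2); rewrite size_rcons sw AR Aw /Fmap x0; split => //.
  move: (iter p f 0) (iter q f 1) uc vc ui vi => u v uc vc ui vi.
  have E1 : f2 @` [set` `]c,v[] = [set` `]f2 c, f2 v[].
    by apply: (@img_oo R f2 c 1 c v); itv.
  have lt : f2 c < f2 v by rewrite lt2 //; itv.
  apply: (@closureS _ [set` `]f2 c, f2 v[]).
    rewrite -E1 => _ [y hy <-]; exists y; first by split; itv.
    by rewrite f2e //; itv.
  by apply: (@cl_oo _ _ _ lt); itv.
- have hc01 : c \in `[0,1] by itv.
  have [w [sw cw]] := IH c hc01 hcn.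
  have [p [q Aw]] := inv w.
  rewrite Aw /= in_itv /= in cw; case/andP: cw => cu cv.
  have uc : iter p f 0 < c by rewrite lt_neqAle nc0 cu.
  have vc : c < iter q f 1 by rewrite lt_neqAle eq_sym nc1 cv.
  have ui : iter p f 0 \in `[0,1] by apply: I01; itv.
  have vi : iter q f 1 \in `[0,1] by apply: I01; itv.
  exists (rcons w P1); rewrite size_rcons sw AR Aw /Fmap x1; split => //.
  move: (iter p f 0) (iter q f 1) uc vc ui vi => u v uc vc ui vi.
  have E1 : f1 @` [set` `]u,c[] = [set` `]f1 u, f1 c[].
    by apply: (@img_oo R f1 0 c u c); itv.
  have lt : f1 u < f1 c by rewrite lt1 //; itv.
  apply: (@closureS _ [set` `]f1 u, f1 c[]).
    rewrite -E1 => _ [y hy <-]; exists y; first by split; itv.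
    by rewrite f1e //; itv.
  by apply: (@cl_oo _ _ _ lt); itv.
- have [_ E0' _] := C1 0.
  have nx := hk 0%N isT; rewrite E0' /= in_itv /= in nx.
  case: (leP (f 0) x) => h.
    have E1 : f1 @` [set` `[0,c[] = [set` `[f1 0, f1 c[].
      by apply: (@img_co R f1 0 c 0 c); itv.
    have : [set` `[f1 0, f1 c[] x by itv.
    rewrite -E1 => -[y hy fyx].
    have fy : f y = x by rewrite -fyx (f1e y hy).
    have yi : y \in `[0,1] by itv.
    have hky : forall k, (k < n)%N -> ~ Hk f k y.
      by move=> k kn /fwd; rewrite fy; apply: hk.
    have [w [sw wy]] := IH y yi hky.
    exists (rcons w P1); rewrite size_rcons sw AR; split => //.
    by apply: subset_closure; exists y.
  have h' : x <= f 1.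
    by case: (leP x (f 1)) => // h'; exfalso; apply: nx; itv.
  have E1 : f2 @` [set` `]c,1]] = [set` `]f2 c, f2 1]].
    by apply: (@img_oc R f2 c 1 c 1); itv.
  have : [set` `]f2 c, f2 1]] x by itv.
  rewrite -E1 => -[y hy fyx].
  have fy : f y = x by rewrite -fyx (f2e y hy).
  have yi : y \in `[0,1] by itv.
  have hky : forall k, (k < n)%N -> ~ Hk f k y.
    by move=> k kn /fwd; rewrite fy; apply: hk.
  have [w [sw wy]] := IH y yi hky.
  exists (rcons w P2); rewrite size_rcons sw AR; split => //.
  by apply: subset_closure; exists y.
Qed.

Unset Implicit Arguments.
Theorem lemma7 (R : realType) (c : R) (f : R -> R) :
  0 < c < 1 ->
  (forall x, x \in `[0, 1] -> f x \in `[0, 1]) ->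
  piecewise_contracting f c ->
  (exists f1 f2 : R -> R,
     [/\ {within [set` `[0, c]], continuous f1},
         {in `[0, c[, f1 =1 f} &
         {in `[0, c] &, {homo f1 : x y / x < y}}] /\
     [/\ {within [set` `[c, 1]], continuous f2},
         {in `]c, 1], f2 =1 f} &
         {in `[c, 1] &, {homo f2 : x y / x < y}}] /\
     (0 = f2 c /\ f2 c < f2 1 /\ f2 1 < f1 0 /\ f1 0 < f1 c /\ f1 c = 1)) ->
  (forall k : nat, ~ closure (Hk f k) c) ->
  [/\ (forall k : nat, Hk f k = [set` `]iter k.+1 f 1, iter k.+1 f 0[]),
      (forall n : nat, (1 <= n)%N ->
         Lambda f c n = [set` `[0, 1]] `\` \bigcup_(k in `I_n) Hk f k),
      [set (0 : R); 1] `<=` Xtilde f c &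
      (forall n : nat, (1 <= n)%N -> forall A, atoms f c n A ->
         exists p q : nat, A = [set` `[iter p f 0, iter q f 1]])].
Proof.
move=> hc hf01 _ [f1 [f2 [[f1c f1e f1m] [[f2c f2e f2m] [h0 [h1 [h2 [h3 h4]]]]]]]] hH.
case/andP: hc => c0 c1.
have H : Hyp c f f1 f2 by exact: MkHyp.
have C1 := L_C1 H; have inv := L_inv H; have sub := L_sub H; have sup := L_sup H.
have nc0 : forall n, iter n f 0 != c := fun n => (L_nc H n).1.
have nc1 : forall n, iter n f 1 != c := fun n => (L_nc H n).2.
have I01 := L_I01 H.
split.
- by move=> k; case: (C1 k).
- move=> n _; apply/seteqP; split.
    move=> x [A [w [sw [-> _]]] Ax]; have [h01 hk] := sub w x Ax.
    split; first exact: h01.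
    by move=> [k kn Hx]; apply: (hk k) => //; rewrite sw.
  move=> x [h01 nH].
  have hk : forall k, (k < n)%N -> ~ Hk f k x.
    by move=> k kn Hx; apply: nH; exists k.
  have [w [sw Aw]] := sup n x h01 hk.
  exists (atom_of f c w) => //; exists w; split => //; split => //; by exists x.
- move=> x hx n _ /=.
  case: hx => ->; split.
  + by apply: I01; itv.
  + by move=> e; move: (nc0 n); rewrite e eqxx.
  + by apply: I01; itv.
  + by move=> e; move: (nc1 n); rewrite e eqxx.
- by move=> n _ A [w [_ [-> _]]]; exact: inv w.
Qed.
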